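(* Let $R$ be a discrete valuation ring and let $G$ be a group acting on $R$ by ring automorphisms. Then the invariant ring $R^G=\{r\in R:\ g(r)=r\text{ for all } g\in G\}$ is either a field or a discrete valuation ring; in particular, $R^G$ is noetherian. *)

(* Defs.v *)
(* Ring-theoretic notions relative to a subset S of an
   integral domain R (S is the carrier of a subring, with R's operations). *)
From mathcomp Require Import all_boot all_algebra.
Set Implicit Arguments. Unset Strict Implicit. Unset Printing Implicit Defensive.
Import GRing.Theory.
Local Open Scope ring_scope.

Section SubringNotions.
Variable R : idomainType.
Implicit Types (S I J M : R -> Prop).

Definition subring_in S : Prop :=
  [/\ S 0, S 1, (forall x y, S x -> S y -> S (x - y)) &
      (forall x y, S x -> S y -> S (x * y))].

Definition unit_in S (x : R) : Prop := S x /\ exists y, S y /\ x * y = 1.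

(* the ring S is a field: every nonzero element is a unit (1 <> 0 holds in R) *)
Definition field_in S : Prop :=
  subring_in S /\ forall x, S x -> x != 0 -> unit_in S x.

Definition ideal_in S I : Prop :=
  [/\ (forall x, I x -> S x), I 0,
      (forall x y, I x -> I y -> I (x + y)) &
      (forall r x, S r -> I x -> I (r * x))].

Definition principal_in S I : Prop :=
  exists a, S a /\ forall x, I x <-> exists r, S r /\ x = r * a.

(* S is a principal ideal domain (S is a domain since R is) *)
Definition pid_in S : Prop := forall I, ideal_in S I -> principal_in S I.

Definition maximal_in S M : Prop :=
  [/\ ideal_in S M, ~ M 1 &
      forall J, ideal_in S J -> (forall x, M x -> J x) ->
        (forall x, J x <-> M x) \/ J 1].

Definition local_in S : Prop :=
  exists M, maximal_in S M /\
    forall M', maximal_in S M' -> forall x, M' x <-> M x.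

Definition dvr_in S : Prop :=
  [/\ subring_in S, pid_in S, local_in S & ~ field_in S].

Definition noetherian_in S : Prop :=
  forall I : nat -> R -> Prop,
    (forall n, ideal_in S (I n)) ->
    (forall n x, I n x -> I n.+1 x) ->
    exists N, forall n, (N <= n)%N -> forall x, I n x -> I N x.

Definition whole : R -> Prop := fun _ => True.

Definition ring_aut (f : R -> R) : Prop :=
  [/\ (forall x y, f (x + y) = f x + f y),
      (forall x y, f (x * y) = f x * f y),
      f 1 = 1 & bijective f].

Definition invariants (G : Type) (act : G -> R -> R) : R -> Prop :=
  fun r => forall g, act g r = r.
End SubringNotions.

Definition is_group (G : Type) (mul : G -> G -> G) (one : G) (inv : G -> G) : Prop :=
  [/\ (forall a b c, mul a (mul b c) = mul (mul a b) c),
      (forall a, mul one a = a), (forall a, mul a one = a),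
      (forall a, mul (inv a) a = one) & (forall a, mul a (inv a) = one)].

Definition ring_aut_action (R : idomainType) (G : Type) (mul : G -> G -> G)
    (one : G) (act : G -> R -> R) : Prop :=
  [/\ forall g, ring_aut (act g),
      (forall r, act one r = r) &
      (forall g h r, act (mul g h) r = act g (act h r))].

(* Main.v *)
Require Import Defs.
From mathcomp Require Import all_boot all_algebra.
From mathcomp Require Import ring.
From Stdlib Require Import ClassicalEpsilon Classical.
Set Implicit Arguments. Unset Strict Implicit. Unset Printing Implicit Defensive.
Import GRing.Theory.
Local Open Scope ring_scope.

Lemma pid_noeth (R : idomainType) (S : R -> Prop) :
  subring_in S -> pid_in S -> noetherian_in S.
Proof.
move=> [S0 S1 SB SM] Hpid Ic HI Hinc.
have mono : forall n m, (n <= m)%N -> forall x, Ic n x -> Ic m x.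
  move=> n m Hnm; rewrite -(subnKC Hnm); move: (m - n)%N => k.
  elim: k => [|k IH] x Hx; first by rewrite addn0.
  rewrite addnS; apply: Hinc; exact: IH.
pose U := fun x => exists n, Ic n x.
have UI : ideal_in S U.
  split.
  - by move=> x [n Hn]; case: (HI n) => H _ _ _; apply: H.
  - by exists 0%N; case: (HI 0%N).
  - move=> x y [n Hx] [m Hy]; exists (maxn n m).
    case: (HI (maxn n m)) => _ _ Hadd _; apply: Hadd.
    + by apply: mono Hx; apply: leq_maxl.
    + by apply: mono Hy; apply: leq_maxr.
  - move=> r x Sr [n Hx]; exists n; case: (HI n) => _ _ _ Hm; exact: Hm.
have [a [Sa Ha]] := Hpid U UI.
have [N HN] : U a by apply/Ha; exists 1; split => //; rewrite mul1r.
exists N => n Hn x Hx.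
have [r [Sr ->]] : exists r, S r /\ x = r * a by apply/Ha; exists n.
by case: (HI N) => _ _ _ Hm; apply: Hm.
Qed.

Lemma aut0 (R : idomainType) (f : R -> R) : ring_aut f -> f 0 = 0.
Proof.
case=> Hadd _ _ _; have H := Hadd 0 0; rewrite addr0 in H.
have := congr1 (fun z => z - f 0) H; rewrite /= addrK subrr => <-; done.
Qed.

Lemma autN (R : idomainType) (f : R -> R) x : ring_aut f -> f (- x) = - f x.
Proof.
move=> Hf; have H := Hf; case: H => Hadd _ _ _.
have H0 := Hadd (- x) x; rewrite addNr aut0 // in H0.
by apply/eqP; rewrite -addr_eq0 -H0.
Qed.

Lemma autB (R : idomainType) (f : R -> R) x y : ring_aut f -> f (x - y) = f x - f y.
Proof. move=> Hf; have H := Hf; case: H => Hadd _ _ _; by rewrite Hadd autN. Qed.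

Lemma inv_subring (R : idomainType) (G : Type) (mul : G -> G -> G) (one : G)
   (act : G -> R -> R) : ring_aut_action mul one act -> subring_in (invariants act).
Proof.
case=> Haut _ _; split => [g|g|x y Hx Hy g|x y Hx Hy g].
- exact: aut0 (Haut g).
- by case: (Haut g).
- by rewrite autB // Hx Hy.
- by case: (Haut g) => _ Hm _ _; rewrite Hm Hx Hy.
Qed.

Lemma inv_div (R : idomainType) (G : Type) (mul : G -> G -> G) (one : G)
   (act : G -> R -> R) a x c : ring_aut_action mul one act ->
   invariants act a -> a != 0 -> invariants act x -> x = c * a ->
   invariants act c.
Proof.
case=> Haut _ _ Ha a0 Hx Hxc g.
apply: (mulIf a0); rewrite -Hxc.
case: (Haut g) => _ Hm _ _.
by rewrite -{1}(Ha g) -Hm -Hxc Hx.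
Qed.

Lemma inv_inv (R : idomainType) (G : Type) (mul : G -> G -> G) (one : G)
   (act : G -> R -> R) a y : ring_aut_action mul one act ->
   invariants act a -> a * y = 1 -> invariants act y.
Proof.
move=> Hact Ha Hy.
have a0 : a != 0 by apply/eqP => a0; move: Hy; rewrite a0 mul0r => /eqP; rewrite eq_sym oner_eq0.
case: Hact => Haut _ _ g; apply: (mulfI a0).
case: (Haut g) => _ Hm H1 _.
by rewrite -{1}(Ha g) -Hm Hy H1.
Qed.

Lemma princ_ideal (R : idomainType) (y : R) :
  ideal_in (@whole R) (fun w => exists r, w = r * y).
Proof.
split => //.
- by exists 0; rewrite mul0r.
- by move=> a b [r ->] [s ->]; exists (r + s); rewrite mulrDl.
- by move=> t a _ [r ->]; exists (t * r); rewrite mulrA.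
Qed.

Lemma nonunit_max (R : idomainType) : pid_in (@whole R) -> forall M,
  maximal_in (@whole R) M -> (forall M', maximal_in (@whole R) M' -> forall x, M' x <-> M x) ->
  forall x : R, ~ (exists y, x * y = 1) -> M x.
Proof.
move=> Hpid M HM Hloc x Hx.
apply: NNPP => HnM.
have Sw : subring_in (@whole R) by split.
have Hnoeth := pid_noeth Sw Hpid.
pose P y := ~ (exists z, y * z = 1) /\ forall M', maximal_in (@whole R) M' -> ~ M' y.
pose Q y z := P z /\ (exists r, y = r * z) /\ ~ (exists r, z = r * y).
have step : forall y, P y -> exists z, Q y z.
  move=> y [Hu Hm].
  pose Iy := fun w : R => exists r, w = r * y.
  have HIy : ideal_in (@whole R) Iy := princ_ideal y.
  have N1 : ~ Iy 1 by move=> [r Hr]; apply: Hu; exists r; rewrite Hr mulrC.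
  have Hnm : ~ maximal_in (@whole R) Iy.
    by move=> Hmax; apply: (Hm _ Hmax); exists 1; rewrite mul1r.
  have [J [HJ HJy HJne]] : exists J, [/\ ideal_in (@whole R) J, (forall w, Iy w -> J w) &
        ~ ((forall w, J w <-> Iy w) \/ J 1)].
    apply: NNPP => Hne; apply: Hnm; split => // J HJ HJs.
    apply: NNPP => Hn; apply: Hne; exists J; by split.
  have [z [_ Hz]] := Hpid J HJ.
  have Jz : J z by apply/Hz; exists 1; split => //; rewrite mul1r.
  case: HJ => _ _ _ Hmul.
  have Jy : J y by apply: HJy; exists 1; rewrite mul1r.
  have [r [_ Hr]] := (proj1 (Hz y)) Jy.
  exists z; split; [split|split].
  - move=> [t Ht]; apply: HJne; right.
    by have := Hmul t z Logic.I Jz; rewrite mulrC Ht.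
  - move=> M' HM' M'z; apply: (Hm M' HM').
    case: HM' => [[_ _ _ Hm'] _ _]; rewrite Hr; exact: Hm'.
  - by exists r.
  - move=> [s Hs]; apply: HJne; left => w; split; last exact: HJy.
    by move/Hz => [t [_ ->]]; exists (t * s); rewrite Hs mulrA.
pose nx := fun y => epsilon (inhabits 0) (Q y).
pose f := fun n => iter n nx x.
have Pf : forall n, P (f n).
  elim=> [|n IH].
  - split => // M' HM' HM'x; apply: HnM; exact/(Hloc M' HM').
  - exact: (epsilon_spec (inhabits 0) (Q (f n)) (step _ IH)).1.
have Qf : forall n, Q (f n) (f n.+1) :=
  fun n => epsilon_spec (inhabits 0) (Q (f n)) (step _ (Pf n)).
pose Ic n := fun w => exists r, w = r * f n.
have Hch : forall n w, Ic n w -> Ic n.+1 w.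
  move=> n w [r ->]; have [_ [[s Hs] _]] := Qf n.
  by exists (r * s); rewrite Hs mulrA.
have [N HN] := Hnoeth Ic (fun n => princ_ideal (f n)) Hch.
have := HN N.+1 (leqnSn N) (f N.+1).
have [_ [_ Hn]] := Qf N.
move=> H; apply: Hn; apply: H; exists 1; by rewrite mul1r.
Qed.

Lemma unit_notM (R : idomainType) (M : R -> Prop) x y :
  maximal_in (@whole R) M -> M x -> x * y = 1 -> False.
Proof.
case=> [[_ _ _ Hm] N1 _] Mx Hxy; apply: N1; rewrite -Hxy mulrC; exact: Hm.
Qed.

Lemma totality (R : idomainType) : pid_in (@whole R) -> forall M,
  maximal_in (@whole R) M -> (forall M', maximal_in (@whole R) M' -> forall x, M' x <-> M x) ->
  forall x y : R, (exists c, y = c * x) \/ (exists c, x = c * y).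
Proof.
move=> Hpid M HM Hloc x y.
pose K := fun w : R => exists r s, w = r * x + s * y.
have HK : ideal_in (@whole R) K.
  split => //.
  - by exists 0, 0; rewrite !mul0r addr0.
  - move=> a b [r [s ->]] [r' [s' ->]]; exists (r + r'), (s + s').
    by rewrite !mulrDl addrACA.
  - by move=> t a _ [r [s ->]]; exists (t * r), (t * s); rewrite mulrDr !mulrA.
have [d [_ Hd]] := Hpid K HK.
have [c [_ Hc]] : exists c, whole c /\ x = c * d.
  by apply/Hd; exists 1, 0; rewrite mul1r mul0r addr0.
have [e [_ He]] : exists e, whole e /\ y = e * d.
  by apply/Hd; exists 0, 1; rewrite mul1r mul0r add0r.
have [r [s Hrs]] : K d by apply/Hd; exists 1; split => //; rewrite mul1r.
case: (eqVneq d 0) => [d0|dn0].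
  by right; exists 0; rewrite Hc d0; ring.
have H1 : 1 = r * c + s * e.
  apply: (mulIf dn0); rewrite mul1r {1}Hrs Hc He; ring.
case: (classic (exists t, r * c * t = 1)) => [[t Ht]|Hn1].
  left; exists (e * (r * t)); rewrite He Hc.
  transitivity (e * d * (r * c * t)); first by rewrite Ht mulr1.
  ring.
case: (classic (exists t, s * e * t = 1)) => [[t Ht]|Hn2].
  right; exists (c * (s * t)); rewrite He Hc.
  transitivity (c * d * (s * e * t)); first by rewrite Ht mulr1.
  ring.
exfalso.
have M1 := nonunit_max Hpid HM Hloc Hn1.
have M2 := nonunit_max Hpid HM Hloc Hn2.
apply: (@unit_notM R M 1 1 HM); last by rewrite mulr1.
by case: HM => [[_ _ Hadd _] _ _]; rewrite H1; apply: Hadd.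
Qed.

Theorem mainTheorem5 (R : idomainType) (G : Type) (mul : G -> G -> G)
    (one : G) (inv : G -> G) (act : G -> R -> R) :
  dvr_in (@whole R) ->
  is_group mul one inv ->
  ring_aut_action mul one act ->
  (field_in (invariants act) \/ dvr_in (invariants act)) /\
  noetherian_in (invariants act).
Proof.
move=> [_ Hpid [M [HM Hloc]] _] _ Hact.
set A := invariants act.
have SA : subring_in A := inv_subring Hact.
have [A0 A1 AB AM] := SA.
have AN : forall y, A y -> A (- y) by move=> y Ay; rewrite -sub0r; exact: AB.
have AD : forall x y, A x -> A y -> A (x + y).
  by move=> x y Ax Ay; rewrite -(opprK y); apply: AB => //; exact: AN.
have [[MS M0 Madd Mmul] MN1 _] := HM.
have tot := totality Hpid HM Hloc.
have nm := nonunit_max Hpid HM Hloc.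
have pidA : pid_in A.
  move=> J [Jsub J0 Jadd Jmul].
  pose K := fun w : R => exists a, J a /\ exists r, w = r * a.
  have HK : ideal_in (@whole R) K.
    split => //.
    - by exists 0; split => //; exists 0; rewrite mul0r.
    - move=> u v [a [Ja [r ->]]] [b [Jb [s ->]]].
      case: (tot a b) => [[c ->]|[c ->]].
      + by exists a; split => //; exists (r + s * c); rewrite mulrDl mulrA.
      + by exists b; split => //; exists (r * c + s); rewrite mulrDl mulrA.
    - by move=> t w _ [a [Ja [r ->]]]; exists a; split => //; exists (t * r); rewrite mulrA.
  have [d [_ Hd]] := Hpid K HK.
  have [a0 [Ja0 [r0 Hr0]]] : K d by apply/Hd; exists 1; split => //; rewrite mul1r.
  exists a0; split; first exact: Jsub.
  move=> x; split; last by move=> [r [Ar ->]]; exact: Jmul.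
  move=> Jx.
  have [t [_ Ht]] : exists t, whole t /\ x = t * d.
    by apply/Hd; exists x; split => //; exists 1; rewrite mul1r.
  case: (eqVneq a0 0) => [a00|a0n0].
    by exists 0; split => //; rewrite Ht Hr0 a00 !mulr0 ?mul0r.
  exists (t * r0); split; last by rewrite Ht Hr0 mulrA.
  apply: (inv_div Hact (Jsub _ Ja0) a0n0 (Jsub _ Jx)).
  by rewrite Ht Hr0 mulrA.
have unitA : forall a y, A a -> a * y = 1 -> A y.
  by move=> a y Aa Hy; exact: (inv_inv Hact Aa Hy).
pose MA := fun a => A a /\ M a.
have idMA : ideal_in A MA.
  split.
  - by move=> x [].
  - by [].
  - by move=> x y [Ax Mx] [Ay My]; split; [exact: AD | exact: Madd].
  - by move=> r x Ar [Ax Mx]; split; [exact: AM | exact: Mmul].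
have maxMA : maximal_in A MA.
  split => //; first by move=> [_ H].
  move=> J [Jsub J0 Jadd Jmul] HJ.
  case: (classic (exists a, J a /\ ~ M a)) => [[a [Ja Ma]]|Hn].
    right.
    have [y Hy] : exists y, a * y = 1 by apply: NNPP => H; apply: Ma; exact: nm.
    have Ay := unitA _ _ (Jsub _ Ja) Hy.
    by have := Jmul y a Ay Ja; rewrite mulrC Hy.
  left => w; split; last exact: HJ.
  move=> Jw; split; first exact: Jsub.
  by apply: NNPP => Mw; apply: Hn; exists w.
have locA : local_in A.
  exists MA; split => // M' [[M'sub M'0 M'add M'mul] N1 Hmax'] x.
  have sub : forall w, M' w -> MA w.
    move=> w M'w; split; first exact: M'sub.
    apply: nm => [[y Hy]]; apply: N1.
    have Ay := unitA _ _ (M'sub _ M'w) Hy.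
    by have := M'mul y w Ay M'w; rewrite mulrC Hy.
  case: (Hmax' MA idMA sub) => [H|[_ H]]; last by case: (MN1 H).
  by split; [exact: sub | move/H].
split; last exact: pid_noeth.
case: (classic (field_in A)) => Hf; [by left | by right].
Qed.
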